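(* Let $\nu\in(\frac12,1]$. Let $x\in\mathrm{dom}(\mathcal R)$ satisfy $\mathcal R(x)=\inf\{\mathcal R(z):z\in\mathbb X,\ Az=Ax\}$, and for every $\alpha>0$ let $x_\alpha\in R_\alpha(Ax)$ be any selection. The following are equivalent: (i) there is $c_1>0$ with $\|Ax-Ax_\alpha\|_{\mathbb Y}\le c_1\alpha^\nu$ for all $\alpha>0$; (ii) there is $c_2>0$ with $\sigma_x(\alpha)\le c_2\alpha^{2\nu-1}$ for all $\alpha>0$; (iii) there is $c_3>0$ with $\mathcal R(x)-\mathcal R(z)\le c_3\|Ax-Az\|_{\mathbb Y}^{\frac{2\nu-1}{\nu}}$ for all $z\in\mathbb X$. More precisely, (i) implies (ii) with $c_2=\frac{c_1^2}{4\nu-2}$, (ii) implies (iii) with $c_3=2c_2^{\frac1{2\nu}}$, and (iii) implies (i) with $c_1=c_3^\nu$.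
   Context: Standing setting: $\mathbb X$ is a real Banach space and $\tau$ a topology on $\mathbb X$ such that $(\mathbb X,\tau)$ is locally convex Hausdorff. $\mathcal R:\mathbb X\to(-\infty,\infty]$ is proper and convex with $\tau$-compact sublevel sets $\{\mathcal R\le\lambda\}$ for all $\lambda\in\mathbb R$. $\mathbb Y$ is a real Hilbert space and $A:\mathbb X\to\mathbb Y$ is linear and $\tau$-to-weak continuous. $T_\alpha(x,g):=\frac1{2\alpha}\|g-Ax\|_{\mathbb Y}^2+\mathcal R(x)$ and $R_\alpha(g):=\operatorname{argmin}_{x\in\mathrm{dom}(\mathcal R)}T_\alpha(x,g)$ for $\alpha>0$, $g\in\mathbb Y$. The defect of the Tikhonov functional is $\sigma_x(\alpha):=T_\alpha(x,Ax)-T_\alpha(x_\alpha,Ax)=\mathcal R(x)-\mathcal R(x_\alpha)-\frac1{2\alpha}\|Ax-Ax_\alpha\|^2_{\mathbb Y}$. *)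

(* Defs.v *)
From HB Require Import structures.
From mathcomp Require Import all_boot all_order all_algebra.
From mathcomp Require Import all_classical all_reals all_analysis.
Set Implicit Arguments. Unset Strict Implicit. Unset Printing Implicit Defensive.
Import Order.TTheory GRing.Theory Num.Theory.
Import numFieldNormedType.Exports.
Local Open Scope classical_set_scope.
Local Open Scope ring_scope.

(* A (second) norm on the carrier of the locally convex space X which makes
   X a real Banach space: norm axioms + completeness w.r.t. this norm. *)
Definition is_banach_norm (R : realType) (X : tvsType R) (nX : X -> R) : Prop :=
  [/\ (forall x, 0 <= nX x),
      (forall x, nX x = 0 -> x = 0),
      (forall (a : R) x, nX (a *: x) = `|a| * nX x),
      (forall x y, nX (x + y) <= nX x + nX y) &
      (forall u : nat -> X,
          (forall e : R, 0 < e -> exists N : nat, forall m n : nat,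
               (N <= m)%N -> (N <= n)%N -> nX (u m - u n) < e) ->
          exists l : X, forall e : R, 0 < e -> exists N : nat,
               forall n : nat, (N <= n)%N -> nX (u n - l) < e)].

(* Y is a real Hilbert space: a complete normed space whose norm is induced
   by the inner product ip (symmetric, bilinear, <y,y> = ||y||^2). *)
Definition is_inner_product (R : realType) (Y : completeNormedModType R)
  (ip : Y -> Y -> R) : Prop :=
  [/\ (forall y z, ip y z = ip z y),
      (forall (a : R) y z w, ip (a *: y + z) w = a * ip y w + ip z w) &
      (forall y, ip y y = `|y| ^+ 2)].

(* A : X -> Y is continuous from (X, tau) to (Y, weak topology): every
   functional z |-> <y, A z> is tau-continuous. *)
Definition tau_weak_continuous (R : realType) (X : tvsType R)
  (Y : completeNormedModType R) (ip : Y -> Y -> R) (A : X -> Y) : Prop :=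
  forall y : Y, continuous (fun z : X => ip y (A z)).

Definition proper_fun (R : realType) (X : Type) (F : X -> \bar R) : Prop :=
  (forall x, F x != -oo%E) /\ (exists x, F x < +oo)%E.

Definition convex_fun (R : realType) (X : lmodType R) (F : X -> \bar R) : Prop :=
  forall (x y : X) (t : R), 0 < t < 1 ->
    (F (t *: x + (1 - t) *: y)%R <= t%:E * F x + (1 - t)%:E * F y)%E.

Definition dom (R : realType) (X : Type) (F : X -> \bar R) : set X :=
  [set x | (F x < +oo)%E].

Definition tikh (R : realType) (X : Type) (Y : normedModType R)
  (A : X -> Y) (F : X -> \bar R) (alpha : R) (x : X) (g : Y) : \bar R :=
  (((2 * alpha)^-1 * `|g - A x| ^+ 2)%:E + F x)%E.

Definition tikh_argmin (R : realType) (X : Type) (Y : normedModType R)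
  (A : X -> Y) (F : X -> \bar R) (alpha : R) (g : Y) : set X :=
  [set x | dom F x /\ forall z, dom F z -> (tikh A F alpha x g <= tikh A F alpha z g)%E].

(* defect sigma_x(alpha) = T_alpha(x, A x) - T_alpha(x_alpha, A x)
   (both terms finite when x, x_alpha lie in dom R) *)
Definition defect (R : realType) (X : Type) (Y : normedModType R)
  (A : X -> Y) (F : X -> \bar R) (x : X) (xa : R -> X) (alpha : R) : R :=
  fine (tikh A F alpha x (A x) - tikh A F alpha (xa alpha) (A x))%E.

(* Main.v *)
Require Import Defs.
From HB Require Import structures.
From mathcomp Require Import all_boot all_order all_algebra.
From mathcomp Require Import all_classical all_reals all_analysis.
From mathcomp Require Import ring lra.
Import Order.TTheory GRing.Theory Num.Theory.
Import numFieldNormedType.Exports.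
Local Open Scope classical_set_scope.
Local Open Scope ring_scope.

Section IP.
Context (R : realType) (Y : completeNormedModType R) (ip : Y -> Y -> R)
  (hip : is_inner_product ip).

Lemma ipD y z w : ip (y + z) w = ip y w + ip z w.
Proof. case: hip => _ h _. by have := h 1 y z w; rewrite scale1r mul1r. Qed.

Lemma ip0l w : ip 0 w = 0.
Proof. have := ipD 0 0 w; rewrite addr0 => h. lra. Qed.

Lemma ipNl y w : ip (- y) w = - ip y w.
Proof. case: hip => _ h _. by have := h (-1) y 0 w; rewrite addr0 scaleN1r ip0l addr0 mulN1r. Qed.

Lemma ipBl y z w : ip (y - z) w = ip y w - ip z w.
Proof. by rewrite ipD ipNl. Qed.

Lemma ipBr w y z : ip w (y - z) = ip w y - ip w z.
Proof. by case: hip => hs _ _; rewrite !(hs w) ipBl. Qed.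

Lemma ip_le y z : ip y z <= `|y| * `|z|.
Proof.
case: hip => hs _ hn.
have e : ip (y + z) (y + z) = ip y y + 2 * ip y z + ip z z.
  by rewrite ipD (hs y (y+z)) (hs z (y+z)) !ipD (hs z y); ring.
move: e; rewrite !hn => e.
have h1 : `|y + z| <= `|y| + `|z| by apply: ler_normD.
have h2 : 0 <= `|y + z| by [].
have h3 : `|y + z| ^+ 2 <= (`|y| + `|z|) ^+ 2.
  by rewrite ler_sqr// nnegrE addr_ge0.
nra.
Qed.

Lemma ip_abs y z : `|ip y z| <= `|y| * `|z|.
Proof.
case: hip => hs _ _.
rewrite ler_norml ip_le andbT lerNl -ipNl.
by apply: le_trans (ip_le _ _) _; rewrite normrN.
Qed.
End IP.

Lemma bern (R : realType) (q s : R) : 0 < q < 1 -> 0 < s <= 1 ->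
  s * (1 - q) <= 1 - q `^ s.
Proof.
case/andP=> q0 q1 /andP[s0 s1].
have [->|sn1] := eqVneq s 1; first by rewrite powRr1 ?(ltW q0) // mul1r.
have s1' : s < 1 by rewrite lt_neqAle sn1.
have h1s : 0 < (1 - s)^-1 by rewrite invr_gt0 subr_gt0.
have hs' : 0 < s^-1 by rewrite invr_gt0.
have hpq : s^-1^-1 + (1-s)^-1^-1 = 1 by rewrite !invrK addrC subrK.
have := conjugate_powR (powR_ge0 q s) ler01 hs' h1s hpq.
rewrite powR1 -powRrM mulfV ?gt_eqF // powRr1 ?(ltW q0) // mulr1 !invrK.
lra.
Qed.

Lemma powR_invl (R : realType) (u r : R) : 0 < u -> (u^-1) `^ r = (u `^ r)^-1.
Proof.
move=> u0; rewrite -(powR_inv1 (ltW u0)) -powRrM mulN1r powRN //.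
Qed.

Lemma powR_sq (R : realType) (d : R) : 0 <= d -> d `^ 2 = d ^+ 2.
Proof. by move=> d0; rewrite -(powR_mulrn _ d0). Qed.

Lemma p_plus (R : realType) (nu : R) : nu != 0 ->
  (2 * nu - 1) / nu + nu^-1 = 2.
Proof. by move=> n0; field. Qed.

Section Main.
Context (R : realType) (X : tvsType R)
  (Y : completeNormedModType R) (ip : Y -> Y -> R) (hip : is_inner_product ip)
  (A : {linear X -> Y}) (hA : tau_weak_continuous ip A)
  (F : X -> \bar R) (hFp : proper_fun F) (hFc : convex_fun F)
  (hFk : forall lam : R, compact [set z : X | (F z <= lam%:E)%E])
  (nu : R) (hnu : 2^-1 < nu <= 1)
  (x : X) (hx : dom F x)
  (hxinf : F x = ereal_inf [set F z | z in [set z : X | A z = A x]])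
  (xa : R -> X) (hxa : forall alpha : R, 0 < alpha -> tikh_argmin A F alpha (A x) (xa alpha)).

Lemma finF z : dom F z -> F z = (fine (F z))%:E.
Proof.
move=> hz; rewrite fineK // fin_numE; case: hFp => h _.
by rewrite h /= (lt_eqF hz).
Qed.

Let fx := fine (F x).
Let fa a := fine (F (xa a)).
Let r a := `|A x - A (xa a)|.

Lemma dom_xa a : 0 < a -> dom F (xa a).
Proof. by move=> a0; case: (hxa a a0). Qed.

Lemma minim a z : 0 < a -> dom F z ->
  fa a + (2*a)^-1 * r a ^+ 2 <= fine (F z) + (2*a)^-1 * `|A x - A z| ^+ 2.
Proof.
move=> a0 hz; have [hd hm] := hxa a a0.
have := hm z hz; rewrite /tikh (finF _ hd) (finF _ hz) -!EFinD lee_fin.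
rewrite /fa /r; lra.
Qed.

Lemma defectE a : 0 < a ->
  defect A F x xa a = fx - (fa a + (2*a)^-1 * r a ^+ 2).
Proof.
move=> a0; have hd := dom_xa _ a0.
rewrite /defect /tikh subrr normr0 expr0n mulr0 add0e (finF _ hx) (finF _ hd).
by rewrite -EFinD /= [_ + fine _]addrC.
Qed.

Lemma fa_le a : 0 < a -> fa a + (2*a)^-1 * r a ^+ 2 <= fx.
Proof.
move=> a0; have := minim _ _ a0 hx; rewrite subrr normr0 expr0n mulr0 addr0.
by [].
Qed.

Lemma conv_step a t : 0 < a -> 0 < t < 1 ->
  fa a + (2*a)^-1 * r a ^+ 2 <=
  t * fx + (1 - t) * fa a + (2*a)^-1 * ((1-t) ^+ 2 * r a ^+ 2).
Proof.
move=> a0 t01; have hd := dom_xa _ a0.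
set z := t *: x + (1 - t) *: xa a.
have hz := hFc x (xa a) t t01; rewrite -/z (finF _ hx) (finF _ hd) -!EFinM -EFinD in hz.
have dz : dom F z by apply: le_lt_trans hz _; exact: ltry.
have := minim _ _ a0 dz; rewrite (finF _ dz) /= in hz; rewrite lee_fin in hz.
have -> : A x - A z = (1 - t) *: (A x - A (xa a)).
  rewrite /z linearD !linearZ /= scalerBr !scalerBl !scale1r.
  by rewrite opprD addrA.
rewrite normrZ ger0_norm ?subr_ge0; last by case/andP: t01 => _ /ltW.
rewrite exprMn -/(r a) => h.
by apply: le_trans h _; rewrite lerD2r.
Qed.

Lemma conv_bound a : 0 < a -> 2 * ((2*a)^-1 * r a ^+ 2) <= fx - fa a.
Proof.
move=> a0; set k := (2*a)^-1 * r a ^+ 2.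
have k0 : 0 <= k.
  apply: mulr_ge0; last exact: sqr_ge0.
  by rewrite invr_ge0 mulr_ge0 // ltW.
apply/ler_addgt0Pr => e e0.
set t := e / (k + e + 1).
have den : 0 < k + e + 1 by lra.
have te : t * (k + e + 1) = e by rewrite /t mulfVK // gt_eqF.
have t0 : 0 < t by rewrite /t divr_gt0.
have t1 : t < 1 by rewrite /t ltr_pdivrMr // mul1r; lra.
have := @conv_step a t a0 (introT andP (conj t0 t1)).
rewrite -/k.
have -> : (2*a)^-1 * ((1-t) ^+ 2 * r a ^+ 2) = (1-t)^+2 * k by rewrite /k; ring.
move=> h.
nra.
Qed.

Lemma step a b : 0 < b -> b < a ->
  defect A F x xa a - defect A F x xa b <= r a ^+ 2 * ((2*b)^-1 - (2*a)^-1).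
Proof.
move=> b0 ba; have a0 : 0 < a by apply: lt_trans ba.
rewrite (defectE _ a0) (defectE _ b0).
have := minim _ _ b0 (dom_xa _ a0); rewrite -/(r a) -/(fa a) /fx => h.
lra.
Qed.

Lemma small c1 : 0 < c1 -> (forall a, 0 < a -> r a <= c1 * a `^ nu) ->
  forall e, 0 < e -> exists2 d, 0 < d & forall b, 0 < b -> b < d -> fx - fa b <= e.
Proof.
move=> c10 H1 e e0.
apply: contrapT => Hn.
have Hb : forall n : nat, exists b, 0 < b /\ b < n.+1%:R^-1 /\ e < fx - fa b.
  move=> n; apply: contrapT => Hm; apply: Hn; exists n.+1%:R^-1 => // b b0 bn.
  rewrite leNgt; apply/negP => he; apply: Hm; exists b; split => //.
have [beta Hbeta] := choice Hb.
pose K := [set z : X | (F z <= (fx - e)%:E)%E].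
pose G := ((fun n => xa (beta n)) @ \oo).
have GK : G K.
  have : \forall n \near \oo, K (xa (beta n)).
    near=> n; have [b0 [_ h]] := Hbeta n.
    by rewrite /K /= (finF _ (dom_xa _ b0)) lee_fin; rewrite /fa /fx in h *; lra.
  by [].
have [z [Kz clz]] := hFk (fx - e) G _ GK.
set w := A z - A x.
have key : forall eta, 0 < eta -> `|ip w (A z) - ip w (A x)| < eta + eta.
  move=> eta eta0.
  have /cvgrPdist_lt /(_ eta eta0) Hz := hA w z.
  set th := eta / (`|w| * c1 + 1).
  have th0 : 0 < th by rewrite /th divr_gt0 // ltr_wpDl // mulr_ge0 // ltW.
  set dl := th `^ nu^-1.
  have nu0 : 0 < nu by case/andP: hnu => h _; apply: lt_trans h; rewrite invr_gt0.
  have dl0 : 0 < dl by rewrite /dl powR_gt0.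
  have dlnu : dl `^ nu = th by rewrite /dl -powRrM mulVf ?gt_eqF // powRr1 // ltW.
  have Hev : \forall n \near \oo, `|ip w (A (xa (beta n))) - ip w (A x)| < eta.
    near=> n.
    have [b0 [bn _]] := Hbeta n.
    have bd : beta n < dl.
      apply: lt_trans bn _; near: n; exact: (near_infty_natSinv_lt (PosNum dl0)).
    have bnu : beta n `^ nu < th.
      rewrite -dlnu; apply: gt0_ltr_powR => //; rewrite nnegrE ltW //.
    rewrite -ipBr //; apply: le_lt_trans (@ip_abs _ _ _ hip _ _) _.
    rewrite [`|A (xa _) - A x|]distrC -/(r (beta n)).
    have hr := H1 _ b0; have hp := powR_ge0 (beta n) nu.
    have hw : 0 <= `|w| by [].
    have -> : eta = th * (`|w| * c1 + 1) by rewrite /th mulfVK // gt_eqF // ltr_wpDl // mulr_ge0 // ltW.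
    have h1 : `|w| * r (beta n) <= `|w| * (c1 * beta n `^ nu) by rewrite ler_wpM2l.
    have h2 : (`|w| * c1 + 1) * beta n `^ nu < (`|w| * c1 + 1) * th.
      by rewrite ltr_pM2l // ltr_wpDl // mulr_ge0 // ltW.
    nra.
  have [u [Hu1 Hu2]] := clz [set u | `|ip w (A u) - ip w (A x)| < eta] _ Hev Hz.
  have -> : ip w (A z) - ip w (A x) = (ip w (A z) - ip w (A u)) + (ip w (A u) - ip w (A x)) by ring.
  apply: le_lt_trans (ler_normD _ _) _.
  by rewrite ltrD.
have d0 : ip w (A z) - ip w (A x) = 0.
  apply/eqP; rewrite -normr_eq0; apply/eqP/le_anti; rewrite normr_ge0 andbT.
  apply/ler_addgt0Pr => e' e'0; rewrite add0r.
  have := key (e' / 2); rewrite divr_gt0 // => /(_ isT) h.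
  by apply: ltW; apply: (lt_le_trans h); rewrite -splitr.
have ww : ip w w = 0 by rewrite {2}/w ipBr.
have : `|w| ^+ 2 = 0 by case: hip => _ _ <-.
move/eqP; rewrite sqrf_eq0 normr_eq0 subr_eq0 => /eqP Azx.
have : (F x <= F z)%E by rewrite hxinf; apply: ereal_inf_lbound; exists z.
rewrite (finF _ hx); move: Kz => /= Kz h.
have := le_trans h Kz; rewrite lee_fin /fx; lra.
Unshelve. all: by end_near.
Qed.

Lemma defect_le a : 0 < a -> defect A F x xa a <= fx - fa a.
Proof.
move=> a0; rewrite (defectE _ a0).
have : 0 <= (2*a)^-1 * r a ^+ 2.
  by apply: mulr_ge0; [rewrite invr_ge0 mulr_ge0 // ltW | exact: sqr_ge0].
lra.
Qed.

Lemma nu_facts : 0 < 2 * nu - 1 <= 1.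
Proof. case/andP: hnu => h1 h2; apply/andP; split; [|lra]. 
have : 2 * 2^-1 = 1 :> R by rewrite mulfV.
nra.
Qed.

Lemma sq_bound c1 a : 0 < a -> r a <= c1 * a `^ nu ->
  r a ^+ 2 <= c1 ^+ 2 * (a `^ (2 * nu - 1) * a).
Proof.
move=> a0 h.
have r0 : 0 <= r a by exact: normr_ge0.
have e : a `^ (2 * nu - 1) * a = a `^ nu * a `^ nu.
  have an : (a != 0) by rewrite gt_eqF.
  rewrite -{2}(powRr1 (ltW a0)) -powRD; last by rewrite an implybT.
  have -> : 2 * nu - 1 + 1 = nu + nu by ring.
  by rewrite powRD // an implybT.
rewrite e.
have : r a ^+ 2 <= (c1 * a `^ nu) ^+ 2 by rewrite ler_sqr // nnegrE (le_trans r0 h).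
by rewrite exprMn.
Qed.

Lemma step2 c1 a q : 0 < a -> 0 < q < 1 -> r a <= c1 * a `^ nu ->
  defect A F x xa a - defect A F x xa (q * a) <=
  c1 ^+ 2 * a `^ (2 * nu - 1) * (1 - q) / (2 * q).
Proof.
move=> a0 /andP[q0 q1] h.
have qa0 : 0 < q * a by rewrite mulr_gt0.
have qaa : q * a < a by rewrite -[X in _ < X]mul1r ltr_pM2r.
have := @step a (q * a) qa0 qaa.
have := @sq_bound c1 a a0 h.
have -> : (2 * (q * a))^-1 - (2 * a)^-1 = (1 - q) / (2 * q) * a^-1.
  by field; rewrite !gt_eqF.
set S := a `^ _; set B := r a ^+ 2; move=> hB hs.
apply: le_trans hs _.
have hq : 0 <= (1 - q) / (2 * q) * a^-1.
  by rewrite !mulr_ge0 // ?invr_ge0 ?subr_ge0 ?mulr_ge0 ?ltW.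
apply: le_trans (ler_wpM2r hq hB) _.
rewrite le_eqVlt; apply/orP; left; apply/eqP.
by field; rewrite !gt_eqF.
Qed.

Lemma i_ii c1 : 0 < c1 -> (forall a, 0 < a -> r a <= c1 * a `^ nu) ->
  forall al, 0 < al ->
  defect A F x xa al <= c1 ^+ 2 / (4 * nu - 2) * al `^ (2 * nu - 1).
Proof.
move=> c10 H1 al al0.
have /andP[s0 s1] := nu_facts.
have e4 : 4 * nu - 2 = 2 * (2 * nu - 1) by ring.
rewrite e4.
move: s0 s1 (@step2 c1) (@bern R); set s := 2 * nu - 1 => s0 s1 hstep hbern.
set cc := c1 ^+ 2 / (2 * s).
set M := c1 ^+ 2 * al `^ s.
have M0 : 0 <= M by rewrite mulr_ge0 ?sqr_ge0 ?powR_ge0.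
apply/ler_addgt0Pr => e e0.
have [d d0 Hd] := @small c1 c10 H1 (e/2) (divr_gt0 e0 (ltr0Sn _ 1)).
have den0 : 0 < 2 * (2 * M + e * s).
  have : 0 < e * s by rewrite mulr_gt0.
  lra.
set eta := e * s / (2 * (2 * M + e * s)).
have etaE : eta * (2 * (2 * M + e * s)) = e * s by rewrite /eta mulfVK // gt_eqF.
have eta0 : 0 < eta by rewrite /eta divr_gt0 // mulr_gt0.
have es0 : 0 < e * s by rewrite mulr_gt0.
have eta2 : eta <= 2^-1.
  have : eta * 2 <= 1 by nra.
  have h2 : 2 * 2^-1 = 1 :> R by rewrite mulfV.
  nra.
set q := 1 - eta.
have q0 : 0 < q.
  have h2 : 2 * 2^-1 = 1 :> R by rewrite mulfV.
  rewrite /q; nra.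
have q1 : q < 1 by rewrite /q; lra.
have q01 : 0 < q < 1 by rewrite q0 q1.
have hq2 : 1 <= 2 * q.
  have h2 : 2 * 2^-1 = 1 :> R by rewrite mulfV.
  rewrite /q; nra.
set K := c1 ^+ 2 * (1 - q) / (2 * q * s).
have K0 : 0 <= K by rewrite /K !mulr_ge0 ?sqr_ge0 ?subr_ge0 ?invr_ge0 ?mulr_ge0 ?ltW.
have key : forall a, 0 < a ->
    defect A F x xa a - cc * a `^ s - (defect A F x xa (q * a) - cc * (q * a) `^ s)
    <= K * (a `^ s - (q * a) `^ s).
  move=> a a0.
  have := hstep a q a0 q01 (H1 _ a0).
  rewrite (powRM _ (ltW q0) (ltW a0)).
  have := hbern q s q01 (introT andP (conj s0 s1)).
  set P := a `^ s; set m := q `^ s => hb hd.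
  have P0 : 0 <= P by exact: powR_ge0.
  set T := c1 ^+ 2 * P / (2 * q * s).
  have d2qs : 0 < 2 * q * s by rewrite !mulr_gt0.
  have T0 : 0 <= T by exact: divr_ge0 (mulr_ge0 (sqr_ge0 _) P0) (ltW d2qs).
  have e1 : c1 ^+ 2 * P * (1 - q) / (2 * q) = T * (s * (1 - q)).
    by rewrite /T; field; rewrite !gt_eqF.
  have e2 : K * (P - m * P) + cc * P - cc * (m * P) = T * (1 - m).
    by rewrite /T /K /cc; field; rewrite !gt_eqF.
  have := ler_wpM2l T0 hb.
  lra.
have tele : forall n : nat, defect A F x xa al - cc * al `^ s <=
    defect A F x xa (q ^+ n * al) - cc * (q ^+ n * al) `^ s
    + K * (al `^ s - (q ^+ n * al) `^ s).
  elim => [|n IH]; first by rewrite expr0 mul1r; lra.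
  have an0 : 0 < q ^+ n * al by rewrite mulr_gt0 // exprn_gt0.
  have := key _ an0; rewrite exprS -mulrA; lra.
have hqn : `|q| < 1 by rewrite ger0_norm ?ltW.
have := cvgr0_norm_lt _ (cvg_expr hqn) _ (divr_gt0 d0 al0).
case=> N _ HN.
have := HN N (leqnn N); rewrite /= ger0_norm ?(exprn_ge0 _ (ltW q0)) // => hN.
have an0 : 0 < q ^+ N * al by rewrite mulr_gt0 // exprn_gt0.
have and : q ^+ N * al < d by rewrite -ltr_pdivlMr.
have := Hd _ an0 and.
have := defect_le _ an0.
have := tele N.
have : 0 <= cc * (q ^+ N * al) `^ s.
  by rewrite mulr_ge0 ?powR_ge0 // divr_ge0 ?sqr_ge0 // mulr_ge0 // ltW.
have : 0 <= K * (q ^+ N * al) `^ s by rewrite mulr_ge0 ?powR_ge0.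
have hK : K * al `^ s <= e / 4.
  have -> : K * al `^ s = M * eta / (2 * q * s) by rewrite /K /M /q; field; rewrite !gt_eqF.
  rewrite ler_pdivrMr ?mulr_gt0 //.
  have h4 : e / 4 * (2 * q * s) = (e * s) * (2 * q) / 4 by field.
  rewrite h4 ler_pdivlMr //.
  have : (e * s) * 1 <= (e * s) * (2 * q) by rewrite ler_wpM2l // ltW.
  nra.
move=> *; lra.
Qed.

Lemma iii_i c3 : 0 < c3 ->
  (forall z, (F x - F z <= (c3 * `|A x - A z| `^ ((2 * nu - 1) / nu))%:E)%E) ->
  forall a, 0 < a -> `|A x - A (xa a)| <= c3 `^ nu * a `^ nu.
Proof.
move=> c30 H3 a a0.
have nu0 : 0 < nu by case/andP: hnu => h _; apply: lt_trans h; rewrite invr_gt0.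
have := H3 (xa a); rewrite (finF _ hx) (finF _ (dom_xa _ a0)) -EFinB lee_fin -/fx -/(fa a) -/(r a).
have := conv_bound _ a0.
move=> hc h3.
have r0 : 0 <= r a by exact: normr_ge0.
have [->|rn0] := eqVneq (r a) 0.
  by rewrite mulr_ge0 // powR_ge0.
have rp : 0 < r a by rewrite lt_neqAle eq_sym rn0.
have h2 : r a ^+ 2 <= a * c3 * r a `^ ((2 * nu - 1) / nu).
  have e : 2 * ((2 * a)^-1 * r a ^+ 2) = r a ^+ 2 / a by field; rewrite gt_eqF.
  rewrite e in hc.
  have := le_trans hc h3; rewrite ler_pdivrMr // => h.
  by apply: (le_trans h); rewrite [X in X <= _]mulrC mulrA.
have e2 : r a ^+ 2 = r a `^ ((2 * nu - 1) / nu) * r a `^ nu^-1.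
  by rewrite -powRD ?p_plus ?gt_eqF ?powR_sq ?implybT.
rewrite e2 mulrC in h2.
have pp : 0 < r a `^ ((2 * nu - 1) / nu) by rewrite powR_gt0.
rewrite ler_pM2r // in h2.
have ac0 : 0 <= a * c3 by rewrite mulr_ge0 // ltW.
have := @ge0_ler_powR _ nu (ltW nu0) _ _ (powR_ge0 _ _) ac0 h2.
rewrite -powRrM mulVf ?gt_eqF // powRr1 // (powRM _ (ltW a0) (ltW c30)).
by rewrite mulrC.
Qed.

Lemma ii_iii c2 : 0 < c2 ->
  (forall a, 0 < a -> defect A F x xa a <= c2 * a `^ (2 * nu - 1)) ->
  forall z, (F x - F z <= (2 * c2 `^ (2 * nu)^-1 * `|A x - A z| `^ ((2 * nu - 1) / nu))%:E)%E.
Proof.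
move=> c20 H2 z.
have nu0 : 0 < nu by case/andP: hnu => h _; apply: lt_trans h; rewrite invr_gt0.
have [dz|ndz] := pselect (dom F z); last first.
  have -> : F z = +oo%E.
    by move: ndz; rewrite /dom /= ltey => /negP; rewrite negbK => /eqP.
  by rewrite (finF _ hx) /= leNye.
rewrite (finF _ hx) (finF _ dz) -EFinB lee_fin -/fx.
set d := `|A x - A z|.
set fz := fine (F z).
have d0 : 0 <= d by exact: normr_ge0.
set u := c2 `^ (2 * nu)^-1.
have u0 : 0 < u by rewrite powR_gt0.
have [d_0|dn0] := eqVneq d 0.
  have /andP[s0 _] := nu_facts.
  rewrite d_0 powR0; last by rewrite mulf_neq0 ?invr_eq0 ?(gt_eqF s0) ?(gt_eqF nu0).
  rewrite mulr0 subr_le0.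
  have Azx : A z = A x.
    by apply/eqP; rewrite eq_sym -subr_eq0; apply/eqP; apply/normr0_eq0.
  have : (F x <= F z)%E by rewrite hxinf; apply: ereal_inf_lbound; exists z.
  by rewrite (finF _ hx) (finF _ dz) lee_fin.
have dp : 0 < d by rewrite lt_neqAle eq_sym dn0.
set v := d `^ nu^-1.
have v0 : 0 < v by rewrite powR_gt0.
set al := v / u.
have al0 : 0 < al by rewrite divr_gt0.
have hu : u `^ (2 * nu) = c2.
  by rewrite /u -powRrM mulVf ?gt_eqF ?mulr_gt0 // powRr1 // ltW.
have hv : v `^ (2 * nu) = d ^+ 2.
  rewrite /v -powRrM.
  have -> : nu^-1 * (2 * nu) = 2 by field; rewrite gt_eqF.
  exact: powR_sq.
have hal : c2 * al `^ (2 * nu - 1) = d ^+ 2 / al.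
  rewrite powRB; last by rewrite (gt_eqF al0) /= implybT.
  rewrite powRr1 ?ltW // /al (powRM _ (ltW v0)) ?invr_ge0 ?ltW //.
  rewrite powR_invl // hu hv; field; rewrite !gt_eqF //.
have hd : d ^+ 2 / al = u * d `^ ((2 * nu - 1) / nu).
  have : d ^+ 2 = d `^ ((2 * nu - 1) / nu) * v.
    by rewrite /v -powRD ?p_plus ?gt_eqF ?powR_sq ?implybT.
  move=> ->; rewrite /al; field; rewrite !gt_eqF //.
have h1 := H2 _ al0.
have h2 := minim _ _ al0 dz.
rewrite (defectE _ al0) in h1.
rewrite -/fz -/d in h2.
have k : (2 * al)^-1 * d ^+ 2 = 2^-1 * (d ^+ 2 / al) by field; rewrite gt_eqF.
rewrite k in h2.
rewrite hal hd in h1.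
have : 0 <= u * d `^ ((2 * nu - 1) / nu) by rewrite mulr_ge0 ?powR_ge0 // ltW.
rewrite hd in h2.
have h22 : 2 * 2^-1 = 1 :> R by rewrite mulfV.
move: h1 h2; rewrite /fx; nra.
Qed.

Lemma bundle :
  [/\ (forall c1 : R, 0 < c1 -> (forall alpha : R, 0 < alpha ->
         `|A x - A (xa alpha)| <= c1 * alpha `^ nu) ->
        forall alpha : R, 0 < alpha ->
        defect A F x xa alpha <= c1 ^+ 2 / (4 * nu - 2) * alpha `^ (2 * nu - 1)),
      (forall c2 : R, 0 < c2 -> (forall alpha : R, 0 < alpha ->
         defect A F x xa alpha <= c2 * alpha `^ (2 * nu - 1)) ->
        forall z : X,
        (F x - F z <= (2 * c2 `^ (2 * nu)^-1 * `|A x - A z| `^ ((2 * nu - 1) / nu))%:E)%E) &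
      (forall c3 : R, 0 < c3 -> (forall z : X,
         (F x - F z <= (c3 * `|A x - A z| `^ ((2 * nu - 1) / nu))%:E)%E) ->
        forall alpha : R, 0 < alpha ->
        `|A x - A (xa alpha)| <= c3 `^ nu * alpha `^ nu)].
Proof.
split.
- move=> c1 c10 H1; exact: (@i_ii c1 c10 H1).
- move=> c2 c20 H2; exact: (@ii_iii c2 c20 H2).
- move=> c3 c30 H3; exact: (@iii_i c3 c30 H3).
Qed.

End Main.


Theorem theorem3 (R : realType)
  (X : tvsType R) (hX : hausdorff_space X)
  (nX : X -> R) (hnX : is_banach_norm nX)
  (Y : completeNormedModType R) (ip : Y -> Y -> R) (hip : is_inner_product ip)
  (A : {linear X -> Y}) (hA : tau_weak_continuous ip A)
  (F : X -> \bar R) (hFp : proper_fun F) (hFc : convex_fun F)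
  (hFk : forall lam : R, compact [set z : X | (F z <= lam%:E)%E])
  (nu : R) (hnu : 2^-1 < nu <= 1)
  (x : X) (hx : dom F x)
  (hxinf : F x = ereal_inf [set F z | z in [set z : X | A z = A x]])
  (xa : R -> X) (hxa : forall alpha : R, 0 < alpha -> tikh_argmin A F alpha (A x) (xa alpha)) :
  let cond1 := fun c1 : R => forall alpha : R, 0 < alpha ->
      `|A x - A (xa alpha)| <= c1 * alpha `^ nu in
  let cond2 := fun c2 : R => forall alpha : R, 0 < alpha ->
      defect A F x xa alpha <= c2 * alpha `^ (2 * nu - 1) in
  let cond3 := fun c3 : R => forall z : X,
      (F x - F z <= (c3 * `|A x - A z| `^ ((2 * nu - 1) / nu))%:E)%E in
  [/\ ((exists2 c1 : R, 0 < c1 & cond1 c1) <-> (exists2 c2 : R, 0 < c2 & cond2 c2)),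
      ((exists2 c2 : R, 0 < c2 & cond2 c2) <-> (exists2 c3 : R, 0 < c3 & cond3 c3)),
      (forall c1 : R, 0 < c1 -> cond1 c1 -> cond2 (c1 ^+ 2 / (4 * nu - 2))),
      (forall c2 : R, 0 < c2 -> cond2 c2 -> cond3 (2 * c2 `^ (2 * nu)^-1)) &
      (forall c3 : R, 0 < c3 -> cond3 c3 -> cond1 (c3 `^ nu))].

Proof.
move=> cond1 cond2 cond3.
have [I12 I23 I31] := @bundle R X Y ip hip A hA F hFp hFc hFk nu hnu x hx hxinf xa hxa.
have /andP[hn1 hn2] := hnu.
have nu0 : 0 < nu by apply: lt_trans hn1; rewrite invr_gt0.
have d0 : 0 < 4 * nu - 2.
  have : 2 * 2^-1 = 1 :> R by rewrite mulfV.
  nra.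
have P12 : forall c1, 0 < c1 -> cond1 c1 -> cond2 (c1 ^+ 2 / (4 * nu - 2)).
  by move=> c1 c10 H1; apply: I12.
have P23 : forall c2, 0 < c2 -> cond2 c2 -> cond3 (2 * c2 `^ (2 * nu)^-1).
  by move=> c2 c20 H2; apply: I23.
have P31 : forall c3, 0 < c3 -> cond3 c3 -> cond1 (c3 `^ nu).
  by move=> c3 c30 H3; apply: I31.
have pos12 : forall c1, 0 < c1 -> 0 < c1 ^+ 2 / (4 * nu - 2).
  by move=> c1 c10; rewrite divr_gt0 // exprn_gt0.
have pos23 : forall c2, 0 < c2 -> 0 < 2 * c2 `^ (2 * nu)^-1.
  by move=> c2 c20; rewrite mulr_gt0 // powR_gt0.
have pos31 : forall c3, 0 < c3 -> 0 < c3 `^ nu.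
  by move=> c3 c30; rewrite powR_gt0.
split => //.
- split.
  + by case=> c1 c10 H1; exists (c1 ^+ 2 / (4 * nu - 2)); [exact: pos12 | exact: P12].
  + case=> c2 c20 H2; exists ((2 * c2 `^ (2 * nu)^-1) `^ nu).
      exact: pos31 (pos23 _ c20).
    exact: P31 (pos23 _ c20) (P23 _ c20 H2).
- split.
  + by case=> c2 c20 H2; exists (2 * c2 `^ (2 * nu)^-1); [exact: pos23 | exact: P23].
  + case=> c3 c30 H3; exists ((c3 `^ nu) ^+ 2 / (4 * nu - 2)).
      exact: pos12 (pos31 _ c30).
    exact: P12 (pos31 _ c30) (P31 _ c30 H3).
Qed.
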